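(* Let $n, s, t$ be positive integers. Let $S_1,\dots, S_s \subseteq \{1,\dots,n\}$ be non-empty pairwise disjoint sets and $T_1,\dots, T_t \subseteq \{1,\dots,n\}$ be non-empty pairwise disjoint sets such that: 1. $\bigcup_{p=1}^s S_p = \bigcup_{q=1}^t T_q=\{1,\dots,n\}$. 2. For any subsets $\theta_1 \subseteq \{1,\dots,s\}$ and $\theta_2 \subseteq \{1,\dots,t\}$, if $\bigcup_{p \in\theta_1} S_p = \bigcup_{q \in\theta_2} T_q=\Gamma$ for some $\Gamma \subseteq \{1,\dots,n\}$, then $\Gamma \in \{\emptyset, \{1,\dots,n\}\}$. Then there exist an integer $l\geq 2$ and a finite sequence of sets $L_1,\dots, L_l \in \{S_1,\dots, S_s\} \cup \{T_1, \dots, T_t\}$ such that $\bigcup_{p=1}^l L_p = \{1,\dots,n\}$, and for all $p \in \{1,\dots,l-1\}$, $(L_1 \cup \dots \cup L_p) \cap L_{p+1} \neq \emptyset$. *)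

(* Defs.v *)
From mathcomp Require Import all_boot.
Set Implicit Arguments. Unset Strict Implicit. Unset Printing Implicit Defensive.

(* Main.v *)
Require Import Defs.
From mathcomp Require Import all_boot.

Theorem lemma1 (n s t : nat) (S : 'I_s -> {set 'I_n}) (T : 'I_t -> {set 'I_n}) :
  0 < n -> 0 < s -> 0 < t ->
  (forall p, S p != set0) ->
  (forall q, T q != set0) ->
  (forall p1 p2, p1 != p2 -> [disjoint S p1 & S p2]) ->
  (forall q1 q2, q1 != q2 -> [disjoint T q1 & T q2]) ->
  \bigcup_(p < s) S p = [set: 'I_n] ->
  \bigcup_(q < t) T q = [set: 'I_n] ->
  (forall (th1 : {set 'I_s}) (th2 : {set 'I_t}) (G : {set 'I_n}),
      \bigcup_(p in th1) S p = G -> \bigcup_(q in th2) T q = G ->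
      G = set0 \/ G = [set: 'I_n]) ->
  exists L : seq {set 'I_n},
    [/\ 2 <= size L,
        (forall X, X \in L -> (exists p, X = S p) \/ (exists q, X = T q)),
        \bigcup_(X <- L) X = [set: 'I_n]
      & forall p, 1 <= p < size L ->
          (\bigcup_(X <- take p L) X) :&: nth set0 L p != set0].
Proof.
move=> n0 s0 t0 Sne Tne Sd Td Scov Tcov Hth.
pose U := fun L : seq {set 'I_n} => \bigcup_(X <- L) X.
pose blk := fun X : {set 'I_n} => (exists p, X = S p) \/ (exists q, X = T q).
pose chain := fun L : seq {set 'I_n} => forall p, 1 <= p < size L ->
          (\bigcup_(X <- take p L) X) :&: nth set0 L p != set0.
have done_case : forall L, U L != set0 ->
   (forall p, S p :&: U L != set0 -> S p \subset U L) ->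
   (forall q, T q :&: U L != set0 -> T q \subset U L) -> U L = setT.
  move=> L Hne HS HT.
  have := Hth [set p | S p \subset U L] [set q | T q \subset U L] (U L).
  case.
  - apply/setP=> x; apply/bigcupP/idP.
      by case=> p; rewrite inE => sub xin; exact: (subsetP sub).
    move=> xU.
    have: x \in \bigcup_(p < s) S p by rewrite Scov inE.
    case/bigcupP=> p _ xp; exists p => //.
    rewrite inE; apply: HS; apply/set0Pn; exists x; by rewrite inE xp xU.
  - apply/setP=> x; apply/bigcupP/idP.
      by case=> p; rewrite inE => sub xin; exact: (subsetP sub).
    move=> xU.
    have: x \in \bigcup_(p < t) T p by rewrite Tcov inE.
    case/bigcupP=> p _ xp; exists p => //.
    rewrite inE; apply: HT; apply/set0Pn; exists x; by rewrite inE xp xU.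
  - by move=> H; rewrite H eqxx in Hne.
  - by [].
have step : forall L B, blk B -> B :&: U L != set0 -> chain L ->
    (forall X, X \in L -> blk X) ->
    [/\ U (L ++ [:: B]) = U L :|: B, chain (L ++ [:: B]) &
        (forall X, X \in L ++ [:: B] -> blk X)].
  move=> L B bB BU Hc Hb; split.
  - by rewrite /U big_cat /= big_cons big_nil setU0.
  - move=> p /andP[p1 plt]; rewrite size_cat /= addn1 ltnS in plt.
    rewrite take_cat nth_cat; case: (ltnP p (size L)) => hp.
      by apply: Hc; rewrite p1 hp.
    have -> : p = size L by apply/eqP; rewrite eqn_leq hp plt.
    by rewrite ?ltnn subnn /= cats0 setIC.
  - by move=> X; rewrite mem_cat inE; case/orP=> [/Hb|/eqP->].
have dich : forall L, U L != set0 -> U L = setT \/ exists B,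
    [/\ blk B, B :&: U L != set0 & exists2 x, x \in B & x \notin U L].
  move=> L Hne.
  case: (boolP [exists p, (S p :&: U L != set0) && ~~ (S p \subset U L)]).
    case/existsP=> p /andP[pU pnot]; have [x xS xn] := subsetPn pnot.
    by right; exists (S p); split => //; [left; exists p | exists x].
  move/existsPn=> HS.
  case: (boolP [exists q, (T q :&: U L != set0) && ~~ (T q \subset U L)]).
    case/existsP=> p /andP[pU pnot]; have [x xS xn] := subsetPn pnot.
    by right; exists (T p); split => //; [right; exists p | exists x].
  move/existsPn=> HT.
  left; apply: done_case => // [p|p] pU; [move: (HS p)|move: (HT p)];
    by rewrite pU /= negbK.
have ext : forall k L, #|~: U L| <= k -> 2 <= size L ->
   (forall X, X \in L -> blk X) -> U L != set0 -> chain L ->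
   exists L', [/\ 2 <= size L', (forall X, X \in L' -> blk X),
                  U L' = setT & chain L'].
  elim=> [|k IH] L Hk H2 Hb Hne Hc;
    case: (dich L Hne) => [EU|[B [bB BU [x xB xn]]]]; try by exists L.
    have: 0 < #|~: U L| by apply/card_gt0P; exists x; rewrite inE.
    by rewrite leqn0 in Hk; rewrite (eqP Hk).
  have [EU Hc' Hb'] := step _ _ bB BU Hc Hb.
  apply: (IH (L ++ [:: B])) => //.
  - rewrite -ltnS; apply: leq_trans Hk; apply: proper_card; rewrite EU setCU.
    apply/properP; split; [exact: subsetIl|]. exists x; first by rewrite inE. by rewrite !inE xB andbF.
  - by rewrite size_cat; apply: leq_trans H2 (leq_addr _ _).
  - rewrite EU; apply: contraNneq Hne => /eqP; rewrite setU_eq0.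
    by case/andP.
have [q qS0] : exists q, T q :&: S (Ordinal s0) != set0.
  have [x xS] := set0Pn _ (Sne (Ordinal s0)).
  have: x \in \bigcup_(q < t) T q by rewrite Tcov inE.
  case/bigcupP=> q _ xq; exists q; apply/set0Pn; exists x; by rewrite inE xq.
have bT : blk (T q) by right; exists q.
have bS : blk (S (Ordinal s0)) by left; exists (Ordinal s0).
have h1 : T q :&: U [:: S (Ordinal s0)] != set0.
  by rewrite /U big_cons big_nil setU0.
have h2 : chain [:: S (Ordinal s0)].
  by move=> p /andP[p1 p0]; rewrite /= ltnS leqNgt p1 in p0.
have h3 : forall X, X \in [:: S (Ordinal s0)] -> blk X.
  by move=> X; rewrite inE => /eqP->.
have [EU Hc Hb] := step [:: S (Ordinal s0)] (T q) bT h1 h2 h3.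
have h4 : U ([:: S (Ordinal s0)] ++ [:: T q]) != set0.
  by rewrite EU /U big_cons big_nil setU0 setU_eq0 negb_and Sne.
have [L' [? ? ? ?]] := ext _ _ (leqnn _) (isT : 2 <= size ([:: S (Ordinal s0)] ++ [:: T q])) Hb h4 Hc.
by exists L'.
Qed.
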